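(* Consider the algorithm SR-DFF run with input $m$ on a stream consistent with a representation $\mathcal{G}$ of size $m$ with at most $k$ exceptions. If the rule $C[\hat x]$ is deleted, then at least one of the following holds: $\hat x$ is an exception, or $C[\hat x]$ is corrupted.
   Context: Setting. $\mathcal{X}$ is a domain, $\mathcal{Y}$ a finite label set, $\Phi$ a set of binary features on $\mathcal{X}$ closed under negation. A representation of size $m$ is a cover $\mathcal{G}=\{G_1,\dots,G_m\}$ of $\mathcal{X}$ by components with labels $\ell(G)$; each $x$ has a fixed component $G(x)\ni x$; $c^*(x)=\ell(G(x))$; for components $G_i,G_j$ with different labels there is $\phi(G_i,G_j)\in\Phi$ true on all of $G_i$ and false on all of $G_j$, with $\phi(G_j,G_i)=\neg\phi(G_i,G_j)$. Protocol: the learner first gets $x_0$ with label $y_0$; then each example $x_t$ arrives, the learner predicts a label with an explanation example previously seen with that label; on a mistake the teacher gives $y_t=c^*(x_t)$ and $\phi(G(x_t),G(\hat x_t))$, $\hat x_t$ the explanation. An exception is an example on which the feedback is inconsistent with the representation/protocol; a stream is consistent with $\mathcal{G}$ with at most $k$ exceptions if at most $k$ examples are exceptions. SR-DFF (input $m$): receives $(x_0,y_0)$; maintains a list $L$ of rules, each indexed by a representative example $x$, with a conjunction $C[x]$ of features and a label $\texttt{label}[x]$. On $x_t$: if some $C[\hat x]\in L$ is satisfied by $x_t$, predict $\texttt{label}[\hat x]$ with explanation $\hat x$; if incorrect, receive $y_t,\phi$, set $C[\hat x]:=C[\hat x]\wedge\neg\phi$, and delete the rule if $C[\hat x]$ has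 at least $m$ features. Otherwise predict $y_0$ with explanation $x_0$; if incorrect, receive $y_t,\phi$ and add a new rule with empty conjunction $C[x_t]$ and $\texttt{label}[x_t]=y_t$. A rule is corrupted if at least one of the features in its conjunction was added during a refinement step triggered by an example $x_t$ that was an exception. *)

(* Defs.v *)
From mathcomp Require Import all_boot.
Set Implicit Arguments. Unset Strict Implicit. Unset Printing Implicit Defensive.

(* X : domain, Y : finite label set, F : the feature set Phi,
   with [fev f x] the (boolean) value of feature f at x and [fneg f] the
   negation of f (Phi closed under negation: fev (fneg f) x = ~~ fev f x,
   assumed in the theorem).                                            *)

(* A representation of size m: components G_0..G_{m-1} (as predicates on
   X), their labels, the fixed component G(x) of every x (which contains x,
   so the G_i cover X), and separating features phi(G_i,G_j) for
   components with different labels.                                   *)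
Record representation (X : Type) (Y : eqType) (F : Type)
    (fev : F -> X -> bool) (fneg : F -> F) (m : nat) := Representation {
  comp_mem : 'I_m -> X -> bool;
  comp_lab : 'I_m -> Y;
  comp_of : X -> 'I_m;
  comp_sep : 'I_m -> 'I_m -> F;
  comp_ofP : forall x, comp_mem (comp_of x) x;
  comp_sep_true : forall i j, comp_lab i != comp_lab j ->
    forall x, comp_mem i x -> fev (comp_sep i j) x;
  comp_sep_false : forall i j, comp_lab i != comp_lab j ->
    forall x, comp_mem j x -> ~~ fev (comp_sep i j) x;
  comp_sep_neg : forall i j, comp_lab i != comp_lab j ->
    comp_sep j i = fneg (comp_sep i j)
}.

Section SRDFF.
Variables (X : Type) (Y : finType) (F : eqType).
Variables (fev : F -> X -> bool) (fneg : F -> F) (m : nat).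

Definition cstar (G : @representation X Y F fev fneg m) (x : X) : Y :=
  comp_lab G (comp_of G x).

(* A rule: (index t of its representative example x_t, label,
   conjunction).  Each conjunct is stored together with the time step of
   the example whose (mistake) feedback added it. *)
Definition rule := (nat * Y * seq (F * nat))%type.
Definition r_id (r : rule) : nat := r.1.1.
Definition r_lab (r : rule) : Y := r.1.2.
Definition r_conj (r : rule) : seq (F * nat) := r.2.

Definition satisfies (C : seq (F * nat)) (x : X) : bool :=
  all (fun p => fev p.1 x) C.

(* The algorithm allows any such choice; the theorem quantifies over all
   valid selectors. *)
Definition valid_selector (sel : nat -> seq rule -> X -> option rule) :=
  forall t L x, match sel t L x with
                | Some r => (r \in L) && satisfies (r_conj r) x
                | None => ~~ has (fun r => satisfies (r_conj r) x) L
                end.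

Record event := Event {
  ev_expl : option nat;              (* explanation: None = x_0, Some j = x_j *)
  ev_mistake : bool;
  ev_deleted : option (nat * seq (F * nat))
    (* Some (j, C): the rule with representative x_j was deleted, its
       conjunction (after the last refinement) being C *)
}.

(* Stream element at time t >= 1: (x_t, y_t, phi_t), where y_t is the label
   given by the teacher and phi_t the feature given on a mistake (ignored
   if there is no mistake). *)
Definition step (sel : nat -> seq rule -> X -> option rule) (y0 : Y)
    (t : nat) (L : seq rule) (a : X * Y * F) : seq rule * event :=
  let: (x, y, phi) := a in
  match sel t L x with
  | Some r =>
      if r_lab r == y then (L, Event (Some (r_id r)) false None)
      else
        let C' := rcons (r_conj r) (fneg phi, t) in
        if m <= size C' then
          ([seq r' <- L | r_id r' != r_id r],
           Event (Some (r_id r)) true (Some (r_id r, C')))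
        else
          ([seq (if r_id r' == r_id r then (r_id r, r_lab r, C') else r')
           | r' <- L], Event (Some (r_id r)) true None)
  | None =>
      if y0 == y then (L, Event None false None)
      else (rcons L (t, y, [::]), Event None true None)
  end.

Fixpoint run_from sel y0 (t : nat) (L : seq rule) (s : seq (X * Y * F))
    : seq event :=
  match s with
  | [::] => [::]
  | a :: s' => let: (L', e) := step sel y0 t L a in
               e :: run_from sel y0 t.+1 L' s'
  end.

(* events of the run of SR-DFF on (x_0,y_0) followed by the stream s;
   the i-th event corresponds to time i+1 *)
Definition run sel y0 (s : seq (X * Y * F)) : seq event :=
  run_from sel y0 1 [::] s.

Definition dummy_event : event := Event None false None.

Definition ex_at (x0 : X) (s : seq (X * Y * F)) (t : nat) : X :=
  nth x0 (x0 :: [seq a.1.1 | a <- s]) t.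

Definition is_exception (G : @representation X Y F fev fneg m)
    sel (x0 : X) (y0 : Y) (s : seq (X * Y * F)) (t : nat) : bool :=
  match t with
  | 0 => y0 != cstar G x0
  | i.+1 =>
      match nth (x0, y0, fneg (comp_sep G (comp_of G x0) (comp_of G x0))) s i with
      | (x, y, phi) =>
        let e := nth dummy_event (run sel y0 s) i in
        let xhat := match ev_expl e with
                    | None => x0 | Some j => ex_at x0 s j end in
        (y != cstar G x) ||
        (ev_mistake e && (phi != comp_sep G (comp_of G x) (comp_of G xhat)))
      end
  end.

Definition num_exceptions G sel x0 y0 s : nat :=
  count (is_exception G sel x0 y0 s) (iota 0 (size s).+1).

Definition corrupted G sel x0 y0 s (C : seq (F * nat)) : bool :=
  has (fun p => is_exception G sel x0 y0 s p.2) C.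

End SRDFF.

(* Main.v *)
Require Import Defs.
From mathcomp Require Import all_boot.

Section S.
Variables (X : Type) (Y : finType) (F : eqType) (fev : F -> X -> bool) (fneg : F -> F) (m : nat).
Variable sel : nat -> seq (rule Y F) -> X -> option (rule Y F).
Hypothesis selP : valid_selector fev sel.
Variables (y0 : Y) (s : seq (X*Y*F)) (d : X*Y*F).

Local Arguments step : simpl never.

Fixpoint Lafter t L (s0 : seq (X*Y*F)) :=
  match s0 with [::] => L | a :: s' => Lafter t.+1 (step fneg m sel y0 t L a).1 s' end.

Lemma run_from_cons t L a s' : run_from fneg m sel y0 t L (a :: s') =
  (step fneg m sel y0 t L a).2 :: run_from fneg m sel y0 t.+1 (step fneg m sel y0 t L a).1 s'.
Proof. by rewrite /=; case: (step fneg m sel y0 t L a). Qed.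

Lemma nth_run t L s0 i : i < size s0 ->
  nth (dummy_event F) (run_from fneg m sel y0 t L s0) i =
  (step fneg m sel y0 (t+i) (Lafter t L (take i s0)) (nth d s0 i)).2.
Proof.
elim: s0 t L i => [|a s' IH] t L [|i] // Hi; rewrite run_from_cons.
- by rewrite addn0.
- by rewrite /= IH // addSnnS.
Qed.

Lemma Lafter_S t L s0 i : i < size s0 ->
  Lafter t L (take i.+1 s0) =
  (step fneg m sel y0 (t+i) (Lafter t L (take i s0)) (nth d s0 i)).1.
Proof.
elim: s0 t L i => [|a s' IH] t L [|i] //= Hi.
- by rewrite addn0 take0.
- by rewrite IH // addSnnS.
Qed.

Definition ev i := nth (dummy_event F) (run fneg m sel y0 s) i.
Definition x_ i := (nth d s i).1.1.
Definition y_ i := (nth d s i).1.2.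
Definition ph_ i := (nth d s i).2.

Definition R j (l : Y) (e : F * nat) : Prop :=
  exists t', e.2 = t'.+1 /\ t' < size s /\ ev_expl (ev t') = Some j /\
    ev_mistake (ev t') /\ l != y_ t' /\ e.1 = fneg (ph_ t').

Fixpoint goodrev j l (rc : seq (F*nat)) : Prop :=
  match rc with
  | [::] => True
  | e :: rc' => (R j l e /\ satisfies fev (rev rc') (x_ e.2.-1)) /\ goodrev j l rc'
  end.

Definition good j l c := goodrev j l (rev c).

Lemma good_rcons j l c e : good j l (rcons c e) <->
  (R j l e /\ satisfies fev c (x_ e.2.-1)) /\ good j l c.
Proof. by rewrite /good rev_rcons /= revK. Qed.

Lemma good_mem j l c : good j l c -> forall e, e \in c -> R j l e.
Proof.
elim/last_ind: c => [|c e0 IH] // /good_rcons [[He0 _] Hc] e.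
rewrite mem_rcons inE => /orP[/eqP -> //|]; exact: IH.
Qed.

Definition Inv (r : rule Y F) := exists j', r_id r = j'.+1 /\ j' < size s /\
  r_lab r = y_ j' /\ good (r_id r) (r_lab r) (r_conj r).

Definition Ls n := Lafter 1 [::] (take n s).

Lemma ev_step n : n < size s ->
  ev n = (step fneg m sel y0 n.+1 (Ls n) (nth d s n)).2.
Proof. by move=> H; rewrite /ev /run (nth_run _ _ _ _ H) add1n. Qed.

Lemma Ls_step n : n < size s ->
  Ls n.+1 = (step fneg m sel y0 n.+1 (Ls n) (nth d s n)).1.
Proof. by move=> H; rewrite /Ls (Lafter_S _ _ _ _ H) add1n. Qed.

Lemma refine_good n r : n < size s -> Inv r ->
  sel n.+1 (Ls n) (x_ n) = Some r -> r_lab r != y_ n ->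
  good (r_id r) (r_lab r) (rcons (r_conj r) (fneg (ph_ n), n.+1)).
Proof.
move=> Hn Ir Hsel Hlab; apply/good_rcons; split; last by case: Ir => j' [_ [_ [_ ?]]].
have Hsat := selP n.+1 (Ls n) (x_ n); rewrite Hsel in Hsat.
split; last by case/andP: Hsat.
exists n; do 2 split => //.
move: Hsel Hlab; rewrite ev_step // /x_ /y_ /ph_.
case Ea: (nth d s n) => [[x y] phi] /= Hsel Hlab.
rewrite /step /= Hsel (negbTE Hlab).
by case: ifP.
Qed.

Lemma inv_all n : n <= size s -> forall r, r \in Ls n -> Inv r.
Proof.
elim: n => [|n IH] Hn; first by move=> r; rewrite /Ls take0.
have Hn' : n < size s by [].
have IH' := IH (ltnW Hn').
rewrite Ls_step //.
have Hrg := @refine_good n _ Hn'.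
move: Hrg; rewrite /x_ /y_ /ph_.
case Ea: (nth d s n) => [[x y] phi] /= Hrg; rewrite /step /=.
case Hs: (sel n.+1 (Ls n) x) => [r|].
- have Hsr := selP n.+1 (Ls n) x; rewrite Hs in Hsr.
  have rin : r \in Ls n by case/andP: Hsr.
  have Ir := IH' _ rin.
  case: eqP => Hl /=; first exact: IH'.
  case: ifP => _ /=.
  + by move=> r' /[!mem_filter] /andP[_ ?]; apply: IH'.
  + move=> r' /mapP[r'' Hr'' ->]; case: eqP => [Hid|_]; last exact: IH'.
    case: (Ir) => j' [H1 [H2 [H3 _]]].
    exists j'; do 3 split => //.
    apply: Hrg => //; by apply/eqP.
- case: eqP => /= _; first exact: IH'.
  move=> r'; rewrite mem_rcons inE => /orP[/eqP->|]; last exact: IH'.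
  exists n; rewrite /y_ Ea; do 3 split => //.
Qed.

Lemma deleted i j C : i < size s -> ev_deleted (ev i) = Some (j, C) ->
  exists j', [/\ j = j'.+1, j' < size s, m <= size C & good j (y_ j') C].
Proof.
move=> Hi; rewrite ev_step //.
have Hrg := @refine_good i _ Hi.
have Hinv := @inv_all i (ltnW Hi).
move: Hrg; rewrite /x_ /y_ /ph_.
case Ea: (nth d s i) => [[x y] phi] /= Hrg; rewrite /step /=.
case Hs: (sel i.+1 (Ls i) x) => [r|]; last by case: eqP.
case: eqP => //= Hl; case: ifP => //= Hm [<- <-].
have Hsr := selP i.+1 (Ls i) x; rewrite Hs in Hsr.
have rin : r \in Ls i by case/andP: Hsr.
case: (Hinv _ rin) => j' [H1 [H2 [H3 _]]].
exists j'; split => //.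
rewrite -/(y_ j') -H3; apply: Hrg => //; [exact: Hinv | by apply/eqP].
Qed.

Variable G : @representation X Y F fev fneg m.
Hypothesis fnegP : forall f x, fev (fneg f) x = ~~ fev f x.

Lemma uniq_key j l (cj : 'I_m) c : good j l c ->
  (forall e, e \in c -> comp_lab G (comp_of G (x_ e.2.-1)) != comp_lab G cj /\
     e.1 = fneg (comp_sep G (comp_of G (x_ e.2.-1)) cj)) ->
  uniq (cj :: map (fun e => comp_of G (x_ e.2.-1)) c).
Proof.
elim/last_ind: c => [|c e IH] //.
move=> /good_rcons [[_ Hsat] Hc] Hf.
rewrite map_rcons -rcons_cons rcons_uniq IH; last first.
  by move=> e' He'; apply: Hf; rewrite mem_rcons inE He' orbT.
  by [].
rewrite andbT inE negb_or.
have He : e \in rcons c e by rewrite mem_rcons mem_head.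
have [Hle _] := Hf e He.
apply/andP; split.
  by apply: contra Hle => /eqP ->.
apply/mapP => -[e' He' Heq].
have He'' : e' \in rcons c e by rewrite mem_rcons inE He' orbT.
have [Hle' Hf'] := Hf e' He''.
move/allP: Hsat => /(_ e' He') /=.
rewrite Hf' fnegP (comp_sep_true Hle') //.
rewrite -Heq; exact: comp_ofP.
Qed.

End S.

Theorem lemma3 (X : Type) (Y : finType) (F : eqType)
    (fev : F -> X -> bool) (fneg : F -> F)
    (fnegP : forall f x, fev (fneg f) x = ~~ fev f x)
    (m : nat) (G : @representation X Y F fev fneg m) (k : nat)
    (x0 : X) (y0 : Y) (s : seq (X * Y * F))
    (sel : nat -> seq (rule Y F) -> X -> option (rule Y F))
    (selP : valid_selector fev sel)
    (hk : num_exceptions G sel x0 y0 s <= k)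
    (i j : nat) (C : seq (F * nat)) :
  i < size s ->
  ev_deleted (nth (dummy_event F) (run fneg m sel y0 s) i) = Some (j, C) ->
  is_exception G sel x0 y0 s j || corrupted G sel x0 y0 s C.
Proof.
move=> Hi Hdel.
pose d := (x0, y0, fneg (comp_sep G (comp_of G x0) (comp_of G x0))).
have [j' [-> Hj' HmC Hgood]] := @deleted X Y F fev fneg m sel selP y0 s d i j C Hi Hdel.
apply/negPn/negP; rewrite negb_or => /andP[nexj ncor].
have Hyj : y_ X Y F s d j' = cstar G (x_ X Y F s d j').
  move: nexj; rewrite /is_exception -/d /y_ /x_.
  by case: (nth d s j') => [[x y] phi] /=; rewrite negb_or => /andP[/negPn/eqP -> _].
have Hexj : ex_at x0 s j'.+1 = x_ X Y F s d j'.
  by rewrite /ex_at /= (nth_map d) // /x_.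
pose cj := comp_of G (x_ X Y F s d j').
have Hent : forall e, e \in C ->
    comp_lab G (comp_of G (x_ X Y F s d e.2.-1)) != comp_lab G cj /\
    e.1 = fneg (comp_sep G (comp_of G (x_ X Y F s d e.2.-1)) cj).
  move=> e He.
  have [t' [Ht [Ht' [Hexpl [Hmis [Hlab Hf]]]]]] := @good_mem X Y F fev fneg m sel y0 s d _ _ _ Hgood e He.
  move/hasPn: ncor => /(_ e He) /=; rewrite Ht /=.
  rewrite /ev in Hexpl Hmis; rewrite -/d Hexpl Hmis Hexj /=.
  move: Hlab Hf; rewrite Hyj /y_ /ph_ /cj /cstar /x_ /=.
  case: (nth d s t') => [[x y] phi] /=.
  rewrite negb_or => Hlab -> /andP[/negPn/eqP Hy /negPn/eqP ->].
  by split => //; rewrite -Hy eq_sym.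
have Hu := @uniq_key X Y F fev fneg m sel y0 s d G fnegP _ _ _ _ Hgood Hent.
have := uniq_leq_size Hu (s2 := enum 'I_m) (fun z _ => mem_enum _ z).
by rewrite size_enum_ord /= size_map ltnNge HmC.
Qed.
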